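(* Let $\lambda_1,\lambda_2\in P^+$ with $\lambda_1+\lambda_2=\lambda$, and let $K\ge2$. Then there is a surjective homomorphism of $\mathfrak{sl}_n\otimes\mathbb C[t]$-modules $W_{\mathbb C[t]/(t^K)}(0,\lambda)\twoheadrightarrow F_{\lambda_1,\lambda_2}$.
   Context: $\mathfrak{sl}_n=\mathfrak n^+\oplus\mathfrak h\oplus\mathfrak n^-$, $R^+$ positive roots, $P^+$ dominant integral weights; for $\alpha\in R^+$ fix an $\mathfrak{sl}_2$-triple $e_\alpha,f_\alpha,h_\alpha$ with $f_\alpha\in\mathfrak g_{-\alpha}$. For a commutative algebra $A$, $\mathfrak{sl}_n\otimes A$ has bracket $[x\otimes p,y\otimes q]=[x,y]\otimes pq$; modules for $\mathfrak{sl}_n\otimes\mathbb C[t]/(t^K)$ are regarded as $\mathfrak{sl}_n\otimes\mathbb C[t]$-modules via the quotient map. For $A=\mathbb C[t]/(t^K)$ and $\lambda\in P^+$, the graded local Weyl module $W_A(0,\lambda)$ is the $\mathfrak{sl}_n\otimes A$-module generated by $w$ subject to $(\mathfrak n^+\otimes A).w=0$, $(\mathfrak h\otimes tA).w=0$, $(h\otimes1).w=\lambda(h)w$ for $h\in\mathfrak h$, and $(f_\alpha\otimes1)^{\lambda(h_\alpha)+1}.w=0$ for $\alpha\in R^+$ (i.e. the maximal $\mathfrak{sl}_n$-integrable quotient of the module induced from the one-dimensional $(\mathfrak n^+\oplus\mathfrak h)\otimes A$-module on which $\mathfrak n^+\otimes A$ acts by $0$ and $h\otimes p$ acts by $p(0)\lambda(h)$).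 For $\nu=\lambda_1+\lambda_2$, $F_{\lambda_1,\lambda_2}$ is the $\mathfrak{sl}_n\otimes\mathbb C[t]$-module generated by $\mathbb 1$ subject to $(\mathfrak n^+\otimes\mathbb C[t]).\mathbb 1=0$, $(\mathfrak h\otimes t\mathbb C[t]).\mathbb 1=0$, $(\mathfrak n^-\otimes t^2\mathbb C[t]).\mathbb 1=0$, $(h\otimes1).\mathbb 1=\nu(h)\mathbb 1$, and for $\alpha\in R^+$: $(f_\alpha\otimes1)^{\nu(h_\alpha)+1}.\mathbb 1=0$, $(f_\alpha\otimes t)^{\min\{\lambda_1(h_\alpha),\lambda_2(h_\alpha)\}+1}.\mathbb 1=0$. *)

(* Defs.v *)
(* Modules for sl_n (x) C[t] are encoded concretely:
   sl_n (x) C[t] = traceless n x n matrices over C[t] = {poly C},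
   with bracket [x,y] = x y - y x (this is [x (x) p, y (x) q] = [x,y] (x) pq).
   A module is a C-vector space V with a map act : 'M[{poly C}]_n -> V -> V
   which is bilinear and satisfies the bracket axiom on traceless matrices
   (its values on non-traceless matrices are irrelevant junk and are never used). *)
From HB Require Import structures.
From mathcomp Require Import all_boot all_order all_algebra.
Set Implicit Arguments. Unset Strict Implicit. Unset Printing Implicit Defensive.
Import GRing.Theory Num.Theory.
Local Open Scope ring_scope.

Section SlnCt.
Variable C : fieldType.
Variable n : nat.

Definition lie := 'M[{poly C}]_n.
Definition in_sl (x : lie) : bool := \tr x == 0.
Definition lbr (x y : lie) : lie := x *m y - y *m x.

Record slmod := SlMod {
  sm_V :> lmodType C;
  sm_act : lie -> sm_V -> sm_V;
  sm_act_linear : forall x (a : C) (u v : sm_V), in_sl x ->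
      sm_act x (a *: u + v) = a *: sm_act x u + sm_act x v;
  sm_linear_act : forall x y (a : C) (v : sm_V), in_sl x -> in_sl y ->
      sm_act (a%:P *: x + y) v = a *: sm_act x v + sm_act y v;
  sm_bracket : forall x y (v : sm_V), in_sl x -> in_sl y ->
      sm_act (lbr x y) v = sm_act x (sm_act y v) - sm_act y (sm_act x v)
}.

Record slhom (M N : slmod) := SlHom {
  sh_fun :> M -> N;
  sh_linear : forall (a : C) (u v : M), sh_fun (a *: u + v) = a *: sh_fun u + sh_fun v;
  sh_equiv : forall x (v : M), in_sl x -> sh_fun (sm_act x v) = sm_act x (sh_fun v)
}.

Definition generated_by (M : slmod) (m : M) : Prop :=
  forall P : M -> Prop, P m -> P 0 ->
    (forall (a : C) (u v : M), P u -> P v -> P (a *: u + v)) ->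
    (forall x (u : M), in_sl x -> P u -> P (sm_act x u)) ->
    forall v, P v.

(* (M, m) is "the module in the class Cls generated by m subject to Rel":
   M is in Cls, m satisfies Rel, m generates M, and M is universal:
   any (N, u) in Cls with u satisfying Rel receives a hom sending m to u. *)
Definition presents (Cls : slmod -> Prop) (Rel : forall N : slmod, N -> Prop)
    (M : slmod) (m : M) : Prop :=
  [/\ Cls M, Rel M m, generated_by m &
      forall (N : slmod) (u : N), Cls N -> Rel N u -> exists f : slhom M N, f m = u].

Definition strict_upper (x : lie) : Prop := forall i j : 'I_n, (j <= i)%N -> x i j = 0.
Definition strict_lower (x : lie) : Prop := forall i j : 'I_n, (i <= j)%N -> x i j = 0.
Definition diagonal (x : lie) : Prop := forall i j : 'I_n, i != j -> x i j = 0.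
Definition divisible_by (p : {poly C}) (x : lie) : Prop := forall i j, p %| x i j.

(* g (x) C[t]/(t^K)-modules, regarded as g (x) C[t]-modules via the quotient:
   g (x) t^K C[t] acts by zero *)
Definition trunc_mod (K : nat) (M : slmod) : Prop :=
  forall x (v : M), in_sl x -> divisible_by 'X^K x -> sm_act x v = 0.

(* dominant integral weights: lam = sum_k lam k * omega_(k+1), k < n-1 *)
Definition weight := 'I_n.-1 -> nat.

(* lam(h) for a diagonal traceless h in h (x) 1 ; omega_(k+1)(h) = sum_(i <= k) h_ii *)
Definition wt_h (lam : weight) (d : 'M[C]_n) : C :=
  \sum_(k < n.-1) (lam k)%:R * \sum_(i < n | (i <= k)%N) d i i.

(* lam(h_alpha) for alpha = eps_i - eps_j, i < j, h_alpha = E_ii - E_jj *)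
Definition wt_co (lam : weight) (i j : 'I_n) : nat :=
  \sum_(k < n.-1 | (i <= k < j)%N) lam k.

(* f_alpha (x) 1 = E_ji and f_alpha (x) t = t E_ji, for alpha = eps_i - eps_j *)
Definition f_one (i j : 'I_n) : lie := delta_mx j i.
Definition f_t (i j : 'I_n) : lie := 'X *: delta_mx j i.

Definition weyl_rel (lam : weight) (M : slmod) (w : M) : Prop :=
  [/\ (forall x, in_sl x -> strict_upper x -> sm_act x w = 0),
      (forall x, in_sl x -> diagonal x -> divisible_by 'X x -> sm_act x w = 0),
      (forall d : 'M[C]_n, is_diag_mx d -> \tr d = 0 ->
          sm_act (map_mx polyC d) w = wt_h lam d *: w) &
      (forall i j : 'I_n, (i < j)%N -> iter (wt_co lam i j).+1 (@sm_act M (f_one i j)) w = 0)].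

Definition F_rel (lam1 lam2 : weight) (M : slmod) (w : M) : Prop :=
  let nu := fun k => (lam1 k + lam2 k)%N in
  (forall x, in_sl x -> strict_upper x -> sm_act x w = 0) /\
      (forall x, in_sl x -> diagonal x -> divisible_by 'X x -> sm_act x w = 0) /\
      (forall x, in_sl x -> strict_lower x -> divisible_by ('X^2) x -> sm_act x w = 0) /\
      (forall d : 'M[C]_n, is_diag_mx d -> \tr d = 0 ->
          sm_act (map_mx polyC d) w = wt_h nu d *: w) /\
      (forall i j : 'I_n, (i < j)%N -> iter (wt_co nu i j).+1 (@sm_act M (f_one i j)) w = 0) /\
      (forall i j : 'I_n, (i < j)%N ->
          iter (minn (wt_co lam1 i j) (wt_co lam2 i j)).+1 (@sm_act M (f_t i j)) w = 0).

End SlnCt.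

Arguments weight : clear implicits.

(* Main.v *)
Require Import Defs.
From HB Require Import structures.
From mathcomp Require Import all_boot all_order all_algebra.
Set Implicit Arguments. Unset Strict Implicit. Unset Printing Implicit Defensive.
Import GRing.Theory Num.Theory.
Local Open Scope ring_scope.

Section Aux.
Variable C : fieldType.
Variable n : nat.

Lemma act0 (M : slmod C n) x : in_sl x -> sm_act x (0 : M) = 0.
Proof.
move=> hx; have := sm_act_linear 1 (0:M) 0 hx.
rewrite !scale1r addr0 => /esym/eqP; rewrite -subr_eq0 addrK => /eqP ->//.
Qed.

Lemma act_add (M : slmod C n) x y (v : M) : in_sl x -> in_sl y ->
  sm_act (x + y) v = sm_act x v + sm_act y v.
Proof.
move=> hx hy; have := sm_linear_act 1 v hx hy.
by rewrite polyC1 !scale1r.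
Qed.

Lemma in_sl_add (x y : lie C n) : in_sl x -> in_sl y -> in_sl (x + y).
Proof. by rewrite /in_sl mxtraceD => /eqP -> /eqP ->; rewrite addr0. Qed.

Lemma in_sl_lbr (x y : lie C n) : in_sl (lbr x y).
Proof.
rewrite /in_sl /lbr; apply/eqP.
by rewrite (raddfB (@mxtrace _ n)) /= mxtrace_mulC subrr.
Qed.

Lemma div_lbr p (x y : lie C n) : divisible_by p x -> divisible_by p (lbr x y).
Proof.
move=> hx i j; rewrite /lbr !mxE; apply: dvdp_sub.
  apply: (big_ind (fun q => p %| q)); rewrite ?dvdp0 //.
    by move=> a b ha hb; rewrite dvdp_add.
  by move=> k _; rewrite dvdp_mulr.
apply: (big_ind (fun q => p %| q)); rewrite ?dvdp0 //.
  by move=> a b ha hb; rewrite dvdp_add.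
by move=> k _; rewrite dvdp_mull.
Qed.

End Aux.

Theorem proposition9p4 (C : numClosedFieldType) (n : nat)
    (lam1 lam2 lam : weight n) (K : nat) :
  (forall k, lam k = (lam1 k + lam2 k)%N) -> (2 <= K)%N ->
  forall (W : slmod C n) (w : W) (F : slmod C n) (one : F),
    presents (trunc_mod K) (@weyl_rel C n lam) w ->
    presents (fun _ => True) (@F_rel C n lam1 lam2) one ->
    exists f : slhom W F, forall v : F, exists u : W, f u = v.
Proof.
move=> hlam hK W w F one [_ _ _ univW] [_ Frel genF _].
case: Frel => [hup [hdg [hlo [hwt [hf _]]]]].
have trF : trunc_mod K F.
  have Pone : forall x, in_sl x -> divisible_by 'X^K x -> sm_act x one = 0.
    move=> x hx hdx.
    pose up : lie C n := \matrix_(i, j) if (i < j)%N then x i j else 0.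
    pose dg : lie C n := \matrix_(i, j) if i == j then x i j else 0.
    pose lo : lie C n := \matrix_(i, j) if (j < i)%N then x i j else 0.
    have ex : x = up + (dg + lo).
      apply/matrixP => i j; rewrite !mxE.
      case: (ltngtP i j) => hij.
      - by rewrite ifF ?addr0 //; apply/negbTE; rewrite neq_ltn hij.
      - by rewrite ifF ?add0r //; apply/negbTE; rewrite neq_ltn hij orbT.
      - by rewrite (_ : i == j) ?add0r ?addr0 //; apply/eqP/val_inj.
    have hsup : in_sl up.
      by rewrite /in_sl /mxtrace; apply/eqP/big1 => i _; rewrite mxE ltnn.
    have hslo : in_sl lo.
      by rewrite /in_sl /mxtrace; apply/eqP/big1 => i _; rewrite mxE ltnn.
    have hsdg : in_sl dg.
      rewrite /in_sl /mxtrace.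
      by under eq_bigr => i _ do rewrite mxE eqxx.
    have dv : forall (m : nat) (b : bool), (m <= K)%N -> forall i j,
        'X^m %| (if b then x i j else 0).
      move=> m b hm i j; case: b; last by rewrite dvdp0.
      exact: dvdp_trans (dvdp_exp2l _ hm) (hdx i j).
    rewrite ex act_add //; last exact: in_sl_add.
    rewrite act_add // hup //; last first.
      by move=> i j hji; rewrite mxE ifF //; apply/negbTE; rewrite -leqNgt.
    rewrite hdg //; last first.
      - by move=> i j; rewrite mxE (dv 1%N) // ltnW.
      - by move=> i j /negbTE; rewrite mxE => ->.
    rewrite hlo ?add0r //.
      by move=> i j hji; rewrite mxE ifF //; apply/negbTE; rewrite -leqNgt.
    by move=> i j; rewrite mxE dv.
  move=> x v hx hdx.
  move: v x hx hdx; apply: genF.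
  - exact: Pone.
  - by move=> x hx _; rewrite act0.
  - move=> a u v hu hv x hx hdx; rewrite sm_act_linear // hu // hv //.
    by rewrite scaler0 addr0.
  - move=> y u hy hu x hx hdx.
    have e := sm_bracket u hx hy.
    have h1 : sm_act (lbr x y) u = 0 by apply: hu; [exact: in_sl_lbr|exact: div_lbr].
    have h2 : sm_act x u = 0 by apply: hu.
    by rewrite h1 h2 act0 // subr0 in e; rewrite -e.
have hwt_eq : forall d : 'M[C]_n, wt_h (fun k => (lam1 k + lam2 k)%N) d = wt_h lam d.
  move=> d; rewrite /wt_h; apply: eq_bigr => k _.
  by rewrite hlam.
have hco_eq : forall i j, wt_co (fun k => (lam1 k + lam2 k)%N) i j = wt_co lam i j.
  by move=> i j; rewrite /wt_co; apply: eq_bigr => k _; rewrite hlam.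
have [f hf1] : exists f : slhom W F, f w = one.
  apply: univW => //; split => //.
  - by move=> d hd htr; rewrite hwt // hwt_eq.
  - by move=> i j hij; rewrite -hco_eq hf.
exists f; apply: genF.
- by exists w.
- exists 0; have := sh_linear f 1 0 0.
  rewrite !scale1r addr0 => /esym/eqP; rewrite -subr_eq0 addrK => /eqP ->//.
- move=> a u v [u1 <-] [v1 <-]; exists (a *: u1 + v1); exact: sh_linear.
- move=> x u hx [u1 <-]; exists (sm_act x u1); exact: sh_equiv.
Qed.
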